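(* Let $m\ge0$, $r>0$, $\gamma>0$ and $0<\alpha<\pi/2$. If $$r\le\sqrt{\frac{\pi(\pi-2\alpha)}{4\alpha^2 m\gamma}},$$ then for all $0\le\tau<\alpha mr$, all $d\ge0$ and all $\omega>0$, $$\mathrm{Re}\left(\Big(\pi+\frac{2j(\pi-\alpha)}{\alpha}\Big)\left(1+\frac{\gamma}{j\omega\big(mj\omega+d+\tfrac1re^{-j\omega\tau}\big)}\right)\right)>0.$$
   Context: $j$ denotes the imaginary unit. *)

(* Defs.v *)
From Stdlib Require Export Reals Lra.
Open Scope R_scope.

Definition Cplx := (R * R)%type.
Definition Re (z : Cplx) : R := fst z.
Definition Im (z : Cplx) : R := snd z.
Definition RtoC (x : R) : Cplx := (x, 0).
Definition Cj : Cplx := (0, 1).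
Definition Cadd (z w : Cplx) : Cplx := (Re z + Re w, Im z + Im w).
Definition Cmul (z w : Cplx) : Cplx :=
  (Re z * Re w - Im z * Im w, Re z * Im w + Im z * Re w).
Definition Cinv (z : Cplx) : Cplx :=
  (Re z / (Re z ^ 2 + Im z ^ 2), - Im z / (Re z ^ 2 + Im z ^ 2)).
Definition Cdiv (z w : Cplx) : Cplx := Cmul z (Cinv w).
Definition Cexpj (t : R) : Cplx := (cos t, sin t).

(* Main.v *)
Require Import Defs.
From Stdlib Require Import Reals Lra Psatz.
Open Scope R_scope.

Lemma polyB0 (v x : R) : 0 < v -> 0 <= x -> 2*x^2 <= (1+v)*v ->
  0 < 27*v^3 + v^2*(30 - 30*x) + v*(3 - 6*x - 21*x^2) + 24*x + 24*x^3.
Proof. intros.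
assert (0 <= x*((1+v)*v - 2*x^2)) by nra.
assert (0 <= v*((1+v)*v - 2*x^2)) by nra.
assert (0 <= x*v) by nra.
assert (0 <= x*v*v) by nra.
assert (0 <= x*x*v) by nra.
nra. Qed.

Lemma polyB (x0 x : R) : 1 < x0 -> 0 <= x -> x < x0 -> 2*x^2 <= x0*(x0-1) ->
  0 < (x0-x)^2*(27*(x0-1) + 24*x) + 48*x^2 - 24*x0*(x0-1).
Proof.
  intros h1 h2 h3 h4.
  replace ((x0-x)^2*(27*(x0-1) + 24*x) + 48*x^2 - 24*x0*(x0-1)) with
     (27*(x0-1)^3 + (x0-1)^2*(30 - 30*x) + (x0-1)*(3 - 6*x - 21*x^2) + 24*x + 24*x^3)
    by ring.
  apply polyB0; [lra|lra|].
  replace (1 + (x0-1)) with x0 by ring. lra.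
Qed.

Lemma caseA (x0 x s dl sn c e : R) : 1 < x0 -> x0 < x -> 0 <= e -> PI*(x - x0) > 2*x0*e ->
  0 <= dl -> sn <= 1 -> -e <= c ->
  0 < PI*x*((sn - x)^2 + (c + dl)^2) + x0*(x0-1)*(PI*(sn - x) + (4*x0-2)*(c + dl)).
Proof.
  intros h1 h2 h3 h4 h5 h6 h7.
  assert (hPI : 0 < PI) by exact PI_RGT_0.
  set (G0 := x0*(x0-1)).
  assert (hG0 : 0 < G0) by (unfold G0; nra).
  assert (C1 : PI*x*(sn-x)^2 + G0*PI*(sn-x) >= PI*(x-1)*(x-x0)*(x+x0-1)).
  { assert (E : PI*x*(sn-x)^2 + G0*PI*(sn-x) - PI*(x-1)*(x-x0)*(x+x0-1)
              = PI*((1-sn)*(x*((x-sn)+x-1) - G0))) by (unfold G0; ring).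
    assert (0 <= x*((x-sn)+x-1) - G0).
    { unfold G0. nra. }
    assert (0 <= (1-sn)*(x*((x-sn)+x-1) - G0)) by nra.
    nra. }
  assert (C2 : PI*x*(c+dl)^2 + G0*(4*x0-2)*(c+dl) >= - G0*(4*x0-2)*e).
  { assert (0 <= PI*x*(c+dl)^2) by (apply Rmult_le_pos; [nra|apply pow2_ge_0]).
    assert (0 < G0*(4*x0-2)) by nra.
    assert (0 <= G0*(4*x0-2)*(c+dl+e)) by (apply Rmult_le_pos; lra).
    nra. }
  assert (C3 : PI*(x-1)*(x-x0)*(x+x0-1) > G0*(4*x0-2)*e).
  { assert (E : G0*(4*x0-2)*e = (2*x0*e)*((x0-1)*(2*x0-1))) by (unfold G0; ring).
    rewrite E.
    assert (0 < (x0-1)*(2*x0-1)) by nra.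
    assert ((x0-1)*(2*x0-1) <= (x-1)*(x+x0-1)) by nra.
    assert (0 < x - x0) by lra.
    assert (PI*(x-x0)*((x0-1)*(2*x0-1)) <= PI*(x-x0)*((x-1)*(x+x0-1))).
    { apply Rmult_le_compat_l; nra. }
    nra. }
  assert (E : PI*x*((sn - x)^2 + (c + dl)^2) + G0*(PI*(sn - x) + (4*x0-2)*(c + dl))
     = (PI*x*(sn-x)^2 + G0*PI*(sn-x)) + (PI*x*(c+dl)^2 + G0*(4*x0-2)*(c+dl))) by ring.
  fold G0. rewrite E. lra.
Qed.

Lemma reduce_h (x0 x dl sn c : R) : 1 < x0 -> 0 < x -> 0 <= dl -> 0 < c -> sn^2 + c^2 = 1 ->
  PI*x*((sn - x)^2 + (c + dl)^2) + x0*(x0-1)*(PI*(sn - x) + (4*x0-2)*(c + dl)) >=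
  PI*(x-1)*(x-x0)*(x+x0-1) + PI*(2*x^2 - x0*(x0-1))*(1-sn) + x0*(x0-1)*(4*x0-2)*c.
Proof.
  intros h1 h2 h3 h4 h5.
  assert (hPI : 0 < PI) by exact PI_RGT_0.
  assert (E : PI*x*((sn - x)^2 + (c + dl)^2) + x0*(x0-1)*(PI*(sn - x) + (4*x0-2)*(c + dl))
     - (PI*(x-1)*(x-x0)*(x+x0-1) + PI*(2*x^2 - x0*(x0-1))*(1-sn) + x0*(x0-1)*(4*x0-2)*c)
     = PI*x*(sn^2+c^2-1) + dl*(PI*x*(2*c+dl) + x0*(x0-1)*(4*x0-2))) by ring.
  rewrite h5 in E.
  assert (0 <= dl*(PI*x*(2*c+dl) + x0*(x0-1)*(4*x0-2))).
  { apply Rmult_le_pos; [lra|].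
    assert (0 < PI*x) by nra. assert (0 < x0*(x0-1)*(4*x0-2)) by (assert (0 < x0*(x0-1)) by nra; nra).
    nra. }
  nra.
Qed.

Lemma caseB1 (x0 x sn c : R) : 1 < x0 -> x0 <= x -> 0 < c -> sn <= 1 ->
  0 < PI*(x-1)*(x-x0)*(x+x0-1) + PI*(2*x^2 - x0*(x0-1))*(1-sn) + x0*(x0-1)*(4*x0-2)*c.
Proof.
  intros h1 h2 h3 h4.
  assert (hPI : 0 < PI) by exact PI_RGT_0.
  assert (0 <= PI*(x-1)*(x-x0)*(x+x0-1)).
  { assert (0 <= (x-1)*(x-x0)) by nra. assert (0 <= PI*((x-1)*(x-x0))) by nra. nra. }
  assert (0 <= PI*(2*x^2 - x0*(x0-1))*(1-sn)).
  { assert (0 <= 2*x^2 - x0*(x0-1)) by nra. apply Rmult_le_pos; nra. }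
  assert (0 < x0*(x0-1)*(4*x0-2)*c).
  { assert (0 < x0*(x0-1)) by nra. assert (0 < x0*(x0-1)*(4*x0-2)) by nra. nra. }
  lra.
Qed.

Lemma caseB2 (x0 x sn c e : R) : 1 < x0 -> 0 < x -> x < x0 -> 2*x0*e = PI*(x0-x) ->
  e - e^3/6 <= c -> 0 <= sn -> sn <= 1 -> PI < 3.2 ->
  0 < PI*(x-1)*(x-x0)*(x+x0-1) + PI*(2*x^2 - x0*(x0-1))*(1-sn) + x0*(x0-1)*(4*x0-2)*c.
Proof.
  intros h1 h2 h3 he hc hs0 hs1 hpi.
  assert (hPI : 0 < PI) by exact PI_RGT_0.
  assert (hk : 0 < x0*(x0-1)*(4*x0-2)) by (assert (0 < x0*(x0-1)) by nra; nra).
  set (z := x0 - x).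
  assert (hz : 0 < z) by (unfold z; lra).
  assert (hzx : z < x0) by (unfold z; lra).
  assert (hxz : x = x0 - z) by (unfold z; ring).
  assert (Hke : x0*(x0-1)*(4*x0-2)*e = PI*(x0-1)*(2*x0-1)*z).
  { replace (x0*(x0-1)*(4*x0-2)*e) with ((2*x0*e)*((x0-1)*(2*x0-1))) by ring.
    rewrite he. fold z. ring. }
  assert (He2 : 4*x0^2*e^2 = PI^2*z^2).
  { replace (4*x0^2*e^2) with ((2*x0*e)^2) by ring. rewrite he. fold z. ring. }
  assert (Hc : x0*(x0-1)*(4*x0-2)*c >= PI*(x0-1)*(2*x0-1)*z*(1 - e^2/6)).
  { assert (x0*(x0-1)*(4*x0-2)*c >= x0*(x0-1)*(4*x0-2)*(e - e^3/6)) by nra.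
    replace (x0*(x0-1)*(4*x0-2)*(e - e^3/6)) with (x0*(x0-1)*(4*x0-2)*e*(1-e^2/6)) in H by field.
    rewrite Hke in H. exact H. }
  assert (Hbase : PI*(x-1)*(x-x0)*(x+x0-1) + PI*(x0-1)*(2*x0-1)*z = PI*z^2*(3*x0-2-z)).
  { rewrite hxz. ring. }
  (* bound on e^2 term: (x0-1)(2x0-1) z e^2/6 <= 7/8 (x0-1) z^2 *)
  assert (Hpi2 : PI^2 <= 10.24) by nra.
  assert (Hez : (2*x0-1)*e^2 <= 21/4 * z).
  { assert (4*x0^2*((2*x0-1)*e^2) <= 4*x0^2*(21/4*z)).
    { replace (4*x0^2*((2*x0-1)*e^2)) with ((2*x0-1)*(4*x0^2*e^2)) by ring.
      rewrite He2.
      assert (0 <= z^2) by nra.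
      assert ((2*x0-1)*(PI^2*z^2) <= (2*x0-1)*(10.24*z^2)).
      { apply Rmult_le_compat_l; nra. }
      assert (z^2 <= x0*z) by nra.
      nra. }
    assert (0 < 4*x0^2) by nra.
    nra. }
  destruct (Rle_lt_dec (x0*(x0-1)) (2*x^2)) as [Hq|Hq].
  -
    assert (0 <= PI*(2*x^2 - x0*(x0-1))*(1-sn)) by (apply Rmult_le_pos; nra).
    assert (0 < PI*z^2*(3*x0-2-z) - PI*(x0-1)*(2*x0-1)*z*(e^2/6)).
    { replace (PI*z^2*(3*x0-2-z) - PI*(x0-1)*(2*x0-1)*z*(e^2/6)) with
        (PI*z*(z*(3*x0-2-z) - (x0-1)*((2*x0-1)*e^2)/6)) by field.
      assert ((x0-1)*((2*x0-1)*e^2) <= (x0-1)*(21/4*z)) by (apply Rmult_le_compat_l; lra).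
      assert (0 < z*(3*x0-2-z) - (x0-1)*((2*x0-1)*e^2)/6) by nra.
      assert (0 < PI*z) by nra. nra. }
    nra.
  -
    assert (PI*(2*x^2 - x0*(x0-1))*(1-sn) >= PI*(2*x^2 - x0*(x0-1))).
    { assert (0 < PI*(x0*(x0-1) - 2*x^2)) by nra. nra. }
    assert (hp := polyB x0 x h1 ltac:(lra) h3 ltac:(lra)).
    assert (0 < PI*z^2*(3*x0-2-z) - PI*(x0-1)*(2*x0-1)*z*(e^2/6) + PI*(2*x^2 - x0*(x0-1))).
    { replace (PI*z^2*(3*x0-2-z) - PI*(x0-1)*(2*x0-1)*z*(e^2/6) + PI*(2*x^2 - x0*(x0-1))) with
        (PI*(z^2*(3*x0-2-z) - (x0-1)*z*((2*x0-1)*e^2)/6 + (2*x^2 - x0*(x0-1)))) by field.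
      assert ((x0-1)*z*((2*x0-1)*e^2) <= (x0-1)*z*(21/4*z)) by (apply Rmult_le_compat_l; nra).
      fold z in hp.
      assert (0 < z^2*(3*x0-2-z) - (x0-1)*z*((2*x0-1)*e^2)/6 + (2*x^2 - x0*(x0-1))).
      { rewrite hxz in hp |- *. nra. }
      nra. }
    nra.
Qed.
Lemma PI_lt_32 : PI < 3.2.
Proof.
  destruct (Rlt_le_dec PI 3.2) as [h|h]; [exact h|exfalso].
  assert (h1 : 0 <= cos 1.6) by (apply cos_ge_0; lra).
  assert (h2 : cos 1.6 <= cos_ub 1.6) by (apply COS; lra).
  assert (h3 : cos_ub 1.6 < 0).
  { unfold cos_ub, cos_approx, cos_term. cbn [sum_f_R0].
    rewrite !INR_IZR_INZ.
    change (Z.of_nat (Factorial.fact (2*0))) with 1%Z.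
    change (Z.of_nat (Factorial.fact (2*1))) with 2%Z.
    change (Z.of_nat (Factorial.fact (2*2))) with 24%Z.
    change (Z.of_nat (Factorial.fact (2*3))) with 720%Z.
    change (Z.of_nat (Factorial.fact (2*4))) with 40320%Z.
    cbn [Nat.mul Nat.add]. lra. }
  lra.
Qed.
Lemma sin_lb_ge (e : R) : 0 <= e <= 2 -> e - e^3/6 <= sin e.
Proof.
  intros [h0 h1].
  assert (PI2_3_2 := PI2_3_2).
  assert (h2 : sin_lb e <= sin e) by (apply SIN; lra).
  assert (h3 : e - e^3/6 <= sin_lb e).
  { unfold sin_lb, sin_approx, sin_term. cbn [sum_f_R0].
    rewrite !INR_IZR_INZ.
    change (Z.of_nat (Factorial.fact (2*0+1))) with 1%Z.
    change (Z.of_nat (Factorial.fact (2*1+1))) with 6%Z.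
    change (Z.of_nat (Factorial.fact (2*2+1))) with 120%Z.
    change (Z.of_nat (Factorial.fact (2*3+1))) with 5040%Z.
    cbn [Nat.mul Nat.add pow].
    assert (0 <= e^2) by nra. assert (e^2 <= 4) by nra.
    assert (0 <= e^5) by (apply pow_le; lra).
    nra. }
  lra.
Qed.

Lemma key (x0 x s dl : R) : 1 < x0 -> 0 < x -> 0 <= s -> 2*x0*s < PI*x -> 0 <= dl ->
  0 < PI*x*((sin s - x)^2 + (cos s + dl)^2) + x0*(x0-1)*(PI*(sin s - x) + (4*x0-2)*(cos s + dl)).
Proof.
  intros h1 h2 h3 h4 h5.
  assert (hPI : 0 < PI) by exact PI_RGT_0.
  assert (hPI4 := PI_4).
  assert (hsc : sin s ^ 2 + cos s ^ 2 = 1).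
  { pose proof (sin2_cos2 s) as E. unfold Rsqr in E. lra. }
  assert (hs1 : sin s <= 1) by (pose proof (SIN_bound s); lra).
  destruct (Rle_lt_dec (PI/2) s) as [hA|hB].
  - set (e := s - PI/2).
    assert (he : 0 <= e) by (unfold e; lra).
    assert (hce : cos s = - sin e).
    { replace s with (PI/2 - - e) by (unfold e; ring). rewrite cos_shift, sin_neg. reflexivity. }
    assert (hse : sin e <= e).
    { destruct (Req_dec e 0) as [E|E].
      - rewrite E, sin_0. lra.
      - left. apply sin_lt_x. lra. }
    assert (hx : x0 < x) by nra.
    apply (caseA x0 x s dl (sin s) (cos s) e); try lra.
    unfold e. nra.
  - assert (hc : 0 < cos s) by (apply cos_gt_0; lra).
    assert (hr := reduce_h x0 x dl (sin s) (cos s) h1 h2 h5 hc hsc).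
    destruct (Rle_lt_dec x0 x) as [hB1|hB2].
    + pose proof (caseB1 x0 x (sin s) (cos s) h1 hB1 hc hs1). lra.
    + set (e := PI*(x0-x)/(2*x0)).
      assert (he : 2*x0*e = PI*(x0-x)) by (unfold e; field; lra).
      assert (he0 : 0 < e) by (unfold e; apply Rdiv_lt_0_compat; nra).
      assert (hse : s < PI/2 - e).
      { assert (2*x0*s < 2*x0*(PI/2 - e)) by nra. nra. }
      assert (hce : sin e < cos s).
      { rewrite <- cos_shift. apply cos_decreasing_1; lra. }
      assert (hsl : e - e^3/6 <= sin e) by (apply sin_lb_ge; lra).
      assert (hsn : 0 <= sin s) by (apply sin_ge_0; lra).
      pose proof (caseB2 x0 x (sin s) (cos s) e h1 h2 hB2 he ltac:(lra) hsn hs1 PI_lt_32).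
      lra.
Qed.

Lemma re_formula (P K g : R) (D : Cplx) :
  Re (Cmul (Cadd (RtoC P) (Cmul (RtoC K) Cj)) (Cadd (RtoC 1) (Cdiv (RtoC g) D)))
  = P + g*(P*Re D + K*Im D) / (Re D^2 + Im D^2).
Proof.
  destruct D as [a b]. cbv [Re Im Cmul Cadd Cdiv Cinv RtoC Cj fst snd].
  unfold Rdiv. ring.
Qed.

Lemma D_formula (m d r omega tau : R) :
  let jw := Cmul Cj (RtoC omega) in
  let D := Cmul jw (Cadd (Cadd (Cmul (RtoC m) jw) (RtoC d))
                     (Cmul (RtoC (1 / r)) (Cexpj (- (omega * tau))))) in
  Re D = omega*((1/r)*sin (omega*tau) - m*omega) /\ Im D = omega*(d + (1/r)*cos (omega*tau)).
Proof.
  cbv [Re Im Cmul Cadd RtoC Cj Cexpj fst snd].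
  rewrite cos_neg, sin_neg. split; ring.
Qed.

Theorem mainTheorem12 (m r gamma alpha : R) :
  0 <= m -> 0 < r -> 0 < gamma -> 0 < alpha < PI / 2 ->
  r <= sqrt (PI * (PI - 2 * alpha) / (4 * alpha ^ 2 * m * gamma)) ->
  forall tau d omega : R,
    0 <= tau < alpha * m * r -> 0 <= d -> 0 < omega ->
    let jw := Cmul Cj (RtoC omega) in
    0 < Re (Cmul
              (Cadd (RtoC PI) (Cmul (RtoC (2 * (PI - alpha) / alpha)) Cj))
              (Cadd (RtoC 1)
                 (Cdiv (RtoC gamma)
                    (Cmul jw
                       (Cadd (Cadd (Cmul (RtoC m) jw) (RtoC d))
                             (Cmul (RtoC (1 / r)) (Cexpj (- (omega * tau))))))))).
Proof.
  intros Hm Hr Hg Ha Hsq tau d omega [Ht0 Ht] Hd Hw jw.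
  rewrite re_formula.
  destruct (D_formula m d r omega tau) as [E1 E2]. fold jw in E1, E2.
  rewrite E1, E2. clear E1 E2.
  assert (hPI : 0 < PI) by exact PI_RGT_0.
  assert (hm : 0 < m).
  { destruct (Rle_lt_dec m 0) as [h|h]; [|exact h].
    assert (m = 0) by lra. subst m. nra. }
  set (s := omega*tau). set (sn := sin s). set (c := cos s).
  set (a := omega * (1 / r * sn - m * omega)).
  set (b := omega * (d + 1 / r * c)).
  set (K := 2 * (PI - alpha) / alpha).
  destruct (Req_dec (a^2 + b^2) 0) as [N0|N0].
  - rewrite N0. unfold Rdiv. rewrite Rinv_0. lra.
  - assert (hN : 0 < a^2 + b^2).
    { assert (0 <= a^2) by nra. assert (0 <= b^2) by nra. lra. }
    set (x0 := PI/(2*alpha)).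
    set (x := m*omega*r). set (dl := d*r).
    assert (hx0 : 1 < x0).
    { unfold x0. apply (Rmult_lt_reg_r (2*alpha)); [lra|]. field_simplify; lra. }
    assert (hx : 0 < x) by (unfold x; repeat apply Rmult_lt_0_compat; lra).
    assert (hs : 0 <= s) by (unfold s; apply Rmult_le_pos; lra).
    assert (hsx : 2*x0*s < PI*x).
    { unfold x0, x, s.
      replace (2 * (PI / (2 * alpha)) * (omega * tau)) with (PI*omega*tau/alpha) by (field; lra).
      apply (Rmult_lt_reg_r alpha); [lra|]. field_simplify; [|lra].
      assert (0 < PI*omega) by nra.
      assert (PI*omega*tau < PI*omega*(alpha*m*r)) by (apply Rmult_lt_compat_l; lra).
      nra. }
    assert (hdl : 0 <= dl) by (unfold dl; nra).
    pose proof (key x0 x s dl hx0 hx hs hsx hdl) as Hkey.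
    fold sn c in Hkey.
    set (N' := (sn - x)^2 + (c + dl)^2).
    set (L := PI*(sn - x) + (4*x0-2)*(c + dl)).
    fold N' L in Hkey.
    set (G := gamma*m*r^2).
    assert (HG : G <= x0*(x0-1)).
    { set (Y := PI * (PI - 2 * alpha) / (4 * alpha ^ 2 * m * gamma)) in Hsq.
      assert (hY : 0 < Y).
      { unfold Y. apply Rdiv_lt_0_compat; [nra|].
        assert (0 < alpha^2) by nra. assert (0 < alpha^2*m) by nra.
        assert (0 < 4 * alpha ^ 2 * m) by nra. nra. }
      assert (hr2 : r^2 <= Y).
      { assert (r*r <= sqrt Y * sqrt Y).
        { apply Rmult_le_compat; lra. }
        rewrite sqrt_sqrt in H by lra. nra. }
      assert (E : x0*(x0-1) = gamma*m*Y) by (unfold x0, Y; field; lra).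
      rewrite E. unfold G.
      assert (0 < gamma*m) by nra.
      nra. }
    assert (hG : 0 < G) by (unfold G; assert (0 < gamma*m) by nra; assert (0 < r^2) by (apply pow_lt; lra); nra).
    assert (hK : K = 4*x0-2) by (unfold K, x0; field; lra).
    assert (Ea : a = (omega/r)*(sn - x)) by (unfold a, x; field; lra).
    assert (Eb : b = (omega/r)*(c + dl)) by (unfold b, dl; field; lra).
    assert (EN : a^2 + b^2 = (omega/r)^2*N') by (rewrite Ea, Eb; unfold N'; ring).
    assert (hN' : 0 < N').
    { assert (0 <= N') by (unfold N'; apply Rplus_le_le_0_compat; apply pow2_ge_0).
      destruct (Req_dec N' 0) as [Z|Z]; [|lra].
      exfalso. apply N0. rewrite EN, Z. ring. }
    assert (Hcore : 0 < PI*x*N' + G*L).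
    { destruct (Rle_lt_dec 0 L) as [hL|hL].
      - assert (0 < PI*x*N') by (apply Rmult_lt_0_compat; nra). nra.
      - assert (G*L >= x0*(x0-1)*L) by nra. nra. }
    assert (EE : PI*(a^2+b^2) + gamma*(PI*a + K*b) = (omega/(m*r^3))*(PI*x*N' + G*L)).
    { rewrite EN, Ea, Eb, hK. unfold N', L, G, x. field. lra. }
    assert (Hpos : 0 < PI*(a^2+b^2) + gamma*(PI*a + K*b)).
    { rewrite EE. apply Rmult_lt_0_compat; [|exact Hcore].
      apply Rdiv_lt_0_compat; [lra|]. assert (0 < r^3) by (apply pow_lt; lra). nra. }
    replace (PI + gamma * (PI * a + K * b) / (a ^ 2 + b ^ 2)) with
      ((PI*(a^2+b^2) + gamma*(PI*a + K*b)) / (a^2+b^2)) by (field; lra).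
    apply Rdiv_lt_0_compat; lra.
Qed.
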